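(* Let $k\ge2$ and $n\in\mathbb{Z}$ with $\mathcal{F}_{n,k}(x)$ not identically zero. Then $$\mathcal{F}_{n,k}(x)=x^{r_{n,k}}\,(x^k+1)^{\rho_{n,k}}\,Q_{n,k}(x^k)$$ for a polynomial $Q_{n,k}(y)\in\mathbb{Z}[y]$ such that $Q_{n,k}(y)$ is not divisible by $y+1$ and $Q_{n,k}(0)\neq0$. Moreover, if $k$ is odd, then $x=-1$ is a root of $\mathcal{F}_{n,k}$ of multiplicity exactly $\rho_{n,k}$.
   Context: For $k\ge2$, the polynomials $\mathcal{F}_{n,k}(x)\in\mathbb{Z}[x]$ ($n\in\mathbb{Z}$) are defined by $\mathcal{F}_{1,k}=1$, $\mathcal{F}_{n,k}=0$ for $n=0,-1,\dots,-(k-2)$, and $\mathcal{F}_{n,k}(x)=\sum_{j=1}^{k}x^{k-j}\mathcal{F}_{n-j,k}(x)$ for all $n\in\mathbb{Z}$. This recurrence is used upwards for $n\ge2$, and downwards for $n\le-(k-1)$ as $\mathcal{F}_{n,k}=\mathcal{F}_{n+k,k}-\sum_{j=1}^{k-1}x^j\mathcal{F}_{n+j,k}$. The quantity $r_{n,k}\in\{0,\dots,k-1\}$ is defined as the residue of $(k-1)(n-1)$ modulo $k$ if $n>0$, and as the residue of $|n|+1$ modulo $k$ if $n\le0$. $\rho_{n,k}$ is defined as follows: let $a\in\{0,\dots,k\}$ be the residue of $n-2$ modulo $k+1$, and let $\rho_{n,k}\in\{0,\dots,k-1\}$ be the residue of $a$ modulo $k$. For $n\le0$ this equals $((k|n|-2)\bmod(k+1))\bmod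 k$. *)

(* Defs.v *)
From mathcomp Require Import all_boot all_order all_algebra.
Set Implicit Arguments. Unset Strict Implicit. Unset Printing Implicit Defensive.
Import Order.TTheory GRing.Theory Num.Theory.
Local Open Scope ring_scope.

(* history of a sequence defined by strong recursion: newest first,
   hist f m = [:: a_m; a_(m-1); ...; a_0] with a_m = f m (hist f m.-1) *)
Fixpoint hist (R : Type) (f : nat -> seq R -> R) (m : nat) : seq R :=
  match m with
  | 0 => [:: f 0%N [::]]
  | m'.+1 => let s := hist f m' in f m s :: s
  end.

(* upF k m = F_{m-(k-2), k}, for m >= 0, i.e. indices n >= -(k-2) *)
Definition up_step (k : nat) (m : nat) (s : seq {poly int}) : {poly int} :=
  if (m < k)%N then (if m == k.-1 then 1 else 0)
  else \sum_(j < k) 'X^(k - j.+1)%N * s`_j.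
Definition upF (k m : nat) : {poly int} := head 0 (hist (up_step k) m).

(* dnF k m = F_{1-m, k}, for m >= 0, i.e. indices n <= 1
   (uses the downward recurrence F_n = F_{n+k} - sum_{j=1}^{k-1} x^j F_{n+j}) *)
Definition dn_step (k : nat) (m : nat) (s : seq {poly int}) : {poly int} :=
  if (m < k)%N then (if m == 0%N then 1 else 0)
  else s`_(k.-1) - \sum_(j < k.-1) 'X^(j.+1) * s`_j.
Definition dnF (k m : nat) : {poly int} := head 0 (hist (dn_step k) m).

Definition Fib (k : nat) (n : int) : {poly int} :=
  match n with
  | Posz p => if (p <= 1)%N then dnF k (1 - p)%N else upF k (p + k - 2)%N
  | Negz p => dnF k p.+2
  end.

Definition rnk (k : nat) (n : int) : nat :=
  match n with
  | Posz p => if (0 < p)%N then ((k - 1) * (p - 1) %% k)%N else ((p + 1) %% k)%N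
  | Negz p => ((p.+1 + 1) %% k)%N
  end.

Definition rhonk (k : nat) (n : int) : nat :=
  (absz ((n - 2) %% (k.+1)%:Z)%Z %% k)%N.

(* Main.v *)
Require Import Defs.
From mathcomp Require Import all_boot all_order all_algebra.
From mathcomp Require Import zify ring.
Import Order.TTheory GRing.Theory Num.Theory.
Local Open Scope ring_scope.

Lemma hist_nth (R : Type) (d : R) f m j : (j <= m)%N ->
  nth d (hist f m) j = head d (hist f (m - j)).
Proof.
elim: m j => [|m IH] [|j] //= hj.
by rewrite IH.
Qed.

Lemma upF_small k m : (m < k)%N -> upF k m = (if m == k.-1 then 1 else 0).
Proof. by case: m => [|m] hm; rewrite /upF /= /up_step hm. Qed.

Lemma upF_rec k m : (0 < k)%N -> (k <= m)%N ->
  upF k m = \sum_(j < k) 'X^(k - j.+1) * upF k (m.-1 - j).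
Proof.
case: m => [|m] hk hm; first by move: (leq_trans hk hm).
rewrite /upF /= /up_step ltnNge hm /=.
apply: eq_bigr => j _; rewrite hist_nth //.
by have := ltn_ord j; lia.
Qed.

Lemma dnF_small k m : (m < k)%N -> dnF k m = (if m == 0%N then 1 else 0).
Proof. by case: m => [|m] hm; rewrite /dnF /= /dn_step hm. Qed.

Lemma dnF_rec k m : (0 < k)%N -> (k <= m)%N ->
  dnF k m = dnF k (m.-1 - k.-1) - \sum_(j < k.-1) 'X^(j.+1) * dnF k (m.-1 - j).
Proof.
case: m => [|m] hk hm; first by move: (leq_trans hk hm).
rewrite /dnF /= /dn_step ltnNge hm /= hist_nth; last by lia.
congr (_ - _); apply: eq_bigr => j _; rewrite hist_nth //.
by have := ltn_ord j; lia.
Qed.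

Lemma FibD k j : Fib k (1 - j%:Z) = dnF k j.
Proof.
case: j => [|[|j]] //.
have -> : 1 - (j.+2)%:Z = Negz j by rewrite NegzE; lia.
by [].
Qed.

Lemma FibU k m : (0 < k)%N -> Fib k (m%:Z + 2 - k%:Z) = upF k m.
Proof.
move=> hk; case: (leqP k m) => hm.
  have -> : m%:Z + 2 - k%:Z = Posz (m + 2 - k) by lia.
  rewrite /Fib; have -> : (m + 2 - k <= 1)%N = false by lia.
  by have -> : (m + 2 - k + k - 2 = m)%N by lia.
have -> : m%:Z + 2 - k%:Z = 1 - (k - 1 - m)%N%:Z by lia.
rewrite FibD dnF_small ?upF_small //; last by lia.
have -> : (k - 1 - m == 0)%N = (m == k.-1) by apply/idP/idP => /eqP ?; apply/eqP; lia.
by [].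
Qed.
Lemma KREC k N : (1 < k)%N ->
  Fib k N = \sum_(j < k) 'X^(k - j.+1) * Fib k (N - (j.+1)%:Z).
Proof.
move=> hk.
case: (ltrP 1 N) => hN.
  pose m := (absz N + k - 2)%N.
  have -> : N = m%:Z + 2 - k%:Z by rewrite /m; lia.
  rewrite FibU ?upF_rec; [|lia|lia|lia].
  apply: eq_bigr => j _; rewrite -FibU; last by lia.
  congr (_ * Fib k _); have := ltn_ord j; rewrite /m; lia.
pose m := (absz (1 - N) + k)%N.
have h1 := @dnF_rec k _ (ltnW hk) (leq_addl (absz (1 - N)) k).
rewrite -/m in h1.
have eN : Fib k N = dnF k (m.-1 - k.-1) by rewrite -FibD; congr Fib; rewrite /m; lia.
have eNk : Fib k (N - k%:Z) = dnF k m by rewrite -FibD; congr Fib; rewrite /m; lia.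
have hm : m = (absz (1 - N) + k)%N by [].
case: k hk m h1 eN eNk hm => [|[|k]] // _ m h1 eN eNk hm.
rewrite big_ord_recr /= subnn expr0 mul1r.
rewrite eN eNk h1 /=.
suff -> : \sum_(i < k.+1) 'X^(k.+2 - i.+1) * Fib k.+2 (N - (i.+1)%:Z) =
  \sum_(j < k.+1) 'X^(j.+1) * dnF k.+2 (m.-1 - j) by rewrite addrC subrK.
rewrite (reindex_inj rev_ord_inj) /=.
apply: eq_bigr => j _; congr (_ * _).
  by congr ('X^_); have := ltn_ord j; lia.
rewrite -FibD; congr Fib; have := ltn_ord j; rewrite hm; lia.
Qed.

Lemma REC k n : (1 < k)%N ->
  'X * Fib k (n + 1) = ('X^k + 1) * Fib k n - Fib k (n - k%:Z).
Proof.
move=> hk.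
have E1 := KREC k (n + 1) hk.
have E2 := KREC k n hk.
case: k hk E1 E2 => [|k] // hk E1 E2.
rewrite big_ord_recr /= subnn expr0 mul1r in E2.
rewrite E1 big_ord_recl /= addrK mulrDr mulrDl mul1r.
rewrite [X in _ = _ + X - _]E2 -addrA addrK; congr (_ + _).
  by rewrite mulrA -exprS subSS subn0.
rewrite mulr_sumr; apply: eq_bigr => j _.
rewrite mulrA -exprS; congr (_ * _).
  congr (GRing.exp _ _); rewrite /bump /=; have := ltn_ord j; lia.
by congr Fib; rewrite /bump /=; lia.
Qed.

Set Implicit Arguments. Unset Strict Implicit. Unset Printing Implicit Defensive.

Definition uu (k : nat) : {poly int} := 'X^k + 1.
Definition Hom (k r : nat) (p : {poly int}) :=
  exists P : {poly int}, p = 'X^r * (P \Po 'X^k).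
Definition LD (k m : nat) (c : int) (e : nat) (p : {poly int}) :=
  exists w, p = uu k ^+ m.+1 * w + c%:P * 'X^e * uu k ^+ m.
Definition XLD (r : nat) (c : int) (p : {poly int}) :=
  exists q, p = 'X^(r.+1) * q + c%:P * 'X^r.

Lemma uu_neq0 k : uu k != 0.
Proof.
apply/eqP => h; have := congr1 (fun p : {poly int} => p`_k) h.
rewrite /uu coefD coefXn eqxx coefC coef0; case: k {h} => //=.
Qed.

Lemma uu0 k : (0 < k)%N -> (uu k).[0] = 1.
Proof. by move=> hk; rewrite /uu hornerD hornerXn expr0n /= -(prednK hk) hornerC add0r. Qed.

Lemma size_uu k : (0 < k)%N -> size (uu k) = k.+1.
Proof. by move=> hk; rewrite /uu -polyC1 size_XnaddC. Qed.

Lemma DEG k r (A : {poly int}) (c : int) : (0 < k)%N -> (r < k)%N ->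
  uu k * A = c%:P * 'X^r -> c = 0.
Proof.
move=> hk hr h; apply/eqP; apply/negPn/negP => hc.
have hR : size (c%:P * 'X^r) = r.+1 by rewrite mul_polyC size_scale // size_polyXn.
have hA : A != 0 by apply/eqP => hA; rewrite hA mulr0 in h; move: hR; rewrite -h size_poly0.
move: hR; rewrite -h size_mul ?uu_neq0 // size_uu // addSn /=.
have : (0 < size A)%N by rewrite size_poly_gt0.
move: (size A) => s; lia.
Qed.

Lemma decomp (P : {poly int}) : exists Q, P = Q * ('X + 1) + (P.[-1])%:P.
Proof.
have : root (P - (P.[-1])%:P) (-1) by rewrite /root hornerD hornerN hornerC subrr.
case/factor_theorem => Q hQ; exists Q.
by rewrite polyCN opprK polyC1 in hQ; rewrite -hQ subrK.
Qed.

Lemma comp_decomp k (Q : {poly int}) (d : int) :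
  (Q * ('X + 1) + d%:P) \Po 'X^k = (Q \Po 'X^k) * uu k + d%:P.
Proof. by rewrite comp_polyD comp_polyM comp_polyD comp_polyX -polyC1 !comp_polyC. Qed.

Lemma X_neq0 : ('X : {poly int}) != 0.
Proof. by rewrite polyX_eq0. Qed.

Lemma Hom0 k r : Hom k r 0.
Proof. by exists 0; rewrite comp_poly0 mulr0. Qed.

Lemma HomB k r p q : Hom k r p -> Hom k r q -> Hom k r (p - q).
Proof. by case=> P -> [Q ->]; exists (P - Q); rewrite comp_polyB mulrBr. Qed.

Lemma Homu k r p : Hom k r p -> Hom k r (uu k * p).
Proof.
case=> P ->; exists (P * ('X + 1)).
rewrite comp_polyM comp_polyD comp_polyX -polyC1 comp_polyC polyC1 /uu; ring.
Qed.

Lemma HomX k r p : Hom k r p -> Hom k r.+1 ('X * p).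
Proof. by case=> P ->; exists P; rewrite exprS mulrA. Qed.

Lemma Homwrap k p : Hom k k p -> Hom k 0 p.
Proof. by case=> P ->; exists ('X * P); rewrite comp_polyM comp_polyX expr0 mul1r. Qed.

Lemma HomdivX k r p : (0 < r)%N -> Hom k r ('X * p) -> Hom k r.-1 p.
Proof.
move=> hr [P hP]; exists P; apply: (mulfI X_neq0).
by rewrite hP mulrA -exprS prednK.
Qed.

Lemma HomdivX0 k p : (0 < k)%N -> Hom k 0 ('X * p) -> Hom k k.-1 p.
Proof.
move=> hk [P hP].
have : root P 0.
  have := congr1 (fun q : {poly int} => q.[0]) hP.
  rewrite /= hornerM hornerX mul0r expr0 mul1r horner_comp hornerXn expr0n.
  by rewrite -(prednK hk) /root => <-.
case/factor_theorem => Q hQ; exists Q.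
apply: (mulfI X_neq0).
rewrite hP expr0 mul1r hQ subr0 comp_polyM comp_polyX mulrA -exprS prednK //.
by rewrite mulrC.
Qed.

Lemma Homdivu k r p : (0 < k)%N -> (r < k)%N -> Hom k r (uu k * p) -> Hom k r p.
Proof.
move=> hk hr [P hP]; case: (decomp P) => Q hQ.
rewrite hQ comp_decomp in hP.
have h1 : uu k * (p - 'X^r * (Q \Po 'X^k)) = (P.[-1])%:P * 'X^r.
  by rewrite mulrBr hP; ring.
have h0 := DEG hk hr h1.
exists Q; apply: (mulfI (uu_neq0 k)).
by rewrite hP h0 addr0; ring.
Qed.

Lemma Hom_coef k r p : (0 < k)%N -> Hom k r p -> exists P : {poly int}, p = 'X^r * (P \Po 'X^k) /\ p`_r = P`_0.
Proof.
move=> hk [P hP]; exists P; split => //.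
by rewrite hP coefXnM ltnn subnn coef_comp_poly_Xn // dvdn0 div0n.
Qed.


Lemma LD0 k m e : LD k m 0 e 0.
Proof. by exists 0; rewrite mulr0 add0r !mul0r. Qed.

Lemma LDB k m c1 c2 e p q : LD k m c1 e p -> LD k m c2 e q -> LD k m (c1 - c2) e (p - q).
Proof. by case=> w1 -> [w2 ->]; exists (w1 - w2); rewrite polyCB; ring. Qed.

Lemma LDu k m c e p : LD k m c e p -> LD k m.+1 c e (uu k * p).
Proof. by case=> w ->; exists w; rewrite !exprS; ring. Qed.

Lemma LDX k m c e p : LD k m c e p -> LD k m c e.+1 ('X * p).
Proof. by case=> w ->; exists ('X * w); rewrite !exprS; ring. Qed.

Lemma Xk_uu k : ('X^k : {poly int}) = uu k - 1.
Proof. by rewrite /uu addrK. Qed.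

Lemma LDsh1 k m c e p : LD k m c (e + k) p -> LD k m (- c) e p.
Proof.
case=> w ->; exists (w + c%:P * 'X^e).
rewrite exprD (Xk_uu k) polyCN exprS; ring.
Qed.

Lemma LDsh2 k m c e p : LD k m c e p -> LD k m (- c) (e + k) p.
Proof.
case=> w ->; exists (w + c%:P * 'X^e).
rewrite exprD (Xk_uu k) polyCN exprS; ring.
Qed.

Lemma LDhi k m m' c e e' p : (m < m')%N -> LD k m' c e p -> LD k m 0 e' p.
Proof.
move=> hm [w ->]; have [d ->] : exists d, m' = (m.+1 + d)%N by exists (m' - m.+1)%N; lia.
exists (uu k ^+ d.+1 * w + c%:P * 'X^e * uu k ^+ d).
rewrite polyC0 -addSn !exprD !exprS; ring.
Qed.

Lemma LDdivX k m c e p : (0 < k)%N -> LD k m c e.+1 ('X * p) -> LD k m c e p.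
Proof.
move=> hk [w hw].
have : root w 0.
  have := congr1 (fun q : {poly int} => q.[0]) hw.
  rewrite /= !hornerE -(prednK hk) !expr0n /= add0r expr1n mul1r mulr0 mul0r addr0.
  by rewrite /root => <-.
case/factor_theorem => w' hw'; exists w'.
apply: (mulfI X_neq0); rewrite hw hw' polyC0 subr0 !exprS; ring.
Qed.

Lemma LDeq k m c c' e p : c = c' -> LD k m c e p -> LD k m c' e p.
Proof. by move=> ->. Qed.

Lemma LDeqe k m c e e' p : e = e' -> LD k m c e p -> LD k m c e' p.
Proof. by move=> ->. Qed.

Lemma XLD0 r : XLD r 0 0.
Proof. by exists 0; rewrite mulr0 add0r mul0r. Qed.

Lemma XLDB r c1 c2 p q : XLD r c1 p -> XLD r c2 q -> XLD r (c1 - c2) (p - q).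
Proof. by case=> w1 -> [w2 ->]; exists (w1 - w2); rewrite polyCB; ring. Qed.

Lemma XLDD r c1 c2 p q : XLD r c1 p -> XLD r c2 q -> XLD r (c1 + c2) (p + q).
Proof. by case=> w1 -> [w2 ->]; exists (w1 + w2); rewrite polyCD; ring. Qed.

Lemma XLDX r c p : XLD r c p -> XLD r.+1 c ('X * p).
Proof. by case=> w ->; exists w; rewrite !exprS; ring. Qed.

Lemma XLDX0 p : XLD 0 0 ('X * p).
Proof. by exists p; rewrite mul0r addr0 expr1. Qed.

Lemma XLDdivX r c p : XLD r.+1 c ('X * p) -> XLD r c p.
Proof.
case=> w hw; exists w; apply: (mulfI X_neq0); rewrite hw !exprS; ring.
Qed.

Lemma XLDu k r c p : (r < k)%N -> XLD r c p -> XLD r c (uu k * p).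
Proof.
move=> hr [w ->]; exists (w * uu k + c%:P * 'X^(k.-1)).
have hk : ('X^k : {poly int}) = 'X * 'X^(k.-1).
  by rewrite -exprS prednK //; lia.
rewrite /uu hk !exprS; ring.
Qed.

Lemma XLDuinv k r c p : (r < k)%N -> XLD r c (uu k * p) -> XLD r c p.
Proof.
move=> hr h.
have h2 : XLD r 0 ('X^k * p).
  exists ('X^(k - r.+1) * p); rewrite mul0r addr0 mulrA -exprD.
  by congr (_ * _); congr ('X^_); lia.
have := XLDB h h2; rewrite subr0 /uu mulrDl mul1r.
by rewrite addrAC subrr add0r.
Qed.

Lemma XLD_coef r c p : XLD r c p -> p`_r = c.
Proof.
case=> w ->; rewrite coefD coefXnM ltnS leqnn mul_polyC coefZ coefXn eqxx mulr1.
by rewrite add0r.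
Qed.

Lemma XLDeq r c c' p : c = c' -> XLD r c p -> XLD r c' p.
Proof. by move=> ->. Qed.

Lemma EXTRACT k r m c e (P : {poly int}) : (0 < k)%N -> (r < k)%N -> (e < k)%N ->
  c != 0 -> LD k m c e ('X^r * (P \Po 'X^k)) ->
  exists Q, P = ('X + 1) ^+ m * Q /\ Q.[-1] != 0.
Proof.
move=> hk hr he hc; elim: m P => [|m IH] P.
  case=> w hw; exists P; split; first by rewrite expr0 mul1r.
  apply/negP => /eqP h0; case: (decomp P) => Q hQ.
  rewrite hQ comp_decomp h0 polyC0 addr0 expr1 expr0 mulr1 in hw.
  have h1 : uu k * ('X^r * (Q \Po 'X^k) - w) = c%:P * 'X^e.
    rewrite mulrBr.
    have -> : uu k * ('X^r * (Q \Po 'X^k)) = 'X^r * ((Q \Po 'X^k) * uu k) by ring.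
    by rewrite hw; ring.
  by move/eqP: hc; apply; apply: (DEG hk he h1).
case=> w hw; case: (decomp P) => Q hQ.
rewrite hQ comp_decomp in hw.
have h1 : uu k * (uu k ^+ m.+1 * w + c%:P * 'X^e * uu k ^+ m - 'X^r * (Q \Po 'X^k))
   = (P.[-1])%:P * 'X^r.
  rewrite mulrBr.
  have -> : uu k * (uu k ^+ m.+1 * w + c%:P * 'X^e * uu k ^+ m) =
    uu k ^+ m.+2 * w + c%:P * 'X^e * uu k ^+ m.+1 by rewrite !exprS; ring.
  rewrite -hw; ring.
have h0 := DEG hk hr h1.
rewrite h0 polyC0 mul0r in h1.
move/eqP: h1; rewrite mulf_eq0 (negbTE (uu_neq0 k)) /= subr_eq0 => /eqP h2.
have [Q0 [hQ0 hQ1]] : exists Q0, Q = ('X + 1) ^+ m * Q0 /\ Q0.[-1] != 0.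
  by apply: IH; exists w; rewrite -h2.
exists Q0; split => //.
by rewrite hQ h0 polyC0 addr0 hQ0 exprS; ring.
Qed.


Lemma Fib1 k : (0 < k)%N -> Fib k 1 = 1.
Proof. by move=> hk; have := FibD k 0; rewrite subr0 => ->; rewrite dnF_small. Qed.

Lemma Fib_zero k j : (0 < j < k)%N -> Fib k (1 - j%:Z) = 0.
Proof.
case/andP=> h1 h2; rewrite FibD dnF_small //.
by case: j h1 h2.
Qed.

Lemma Fib_1k k : (1 < k)%N -> Fib k (1 - k%:Z) = 1.
Proof.
move=> hk; rewrite FibD dnF_rec ?(ltnW hk) //.
rewrite dnF_small; last by lia.
have -> : (k.-1 - k.-1 == 0)%N by rewrite subnn.
rewrite big1 ?subr0 // => j _.
rewrite dnF_small; last by lia.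
have -> : (k.-1 - j == 0)%N = false by have := ltn_ord j; lia.
by rewrite mulr0.
Qed.

Lemma Fib2 k : (1 < k)%N -> Fib k 2 = 'X^(k.-1).
Proof.
move=> hk.
have -> : (2 : int) = k%:Z + 2 - k%:Z by ring.
rewrite FibU ?(ltnW hk) // upF_rec ?(ltnW hk) //.
case: k hk => [|k] // hk.
rewrite big_ord_recl /= subn0 upF_small // eqxx mulr1 subSS subn0.
rewrite big1 ?addr0 // => j _.
rewrite upF_small; last by lia.
have -> : (k - bump 0 j == k)%N = false by rewrite /bump /=; have := ltn_ord j; lia.
by rewrite mulr0.
Qed.

Definition Tb k (b : int) (a : nat) := Fib k (2 + b * (k%:Z + 1) + a%:Z).
Definition Fr k (r : nat) (p : int) := Fib k (1 - r%:Z - k%:Z * p).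

Lemma TF1 k b a : (1 < k)%N ->
  'X * Tb k b a.+1 = uu k * Tb k b a - Tb k (b - 1) a.+1.
Proof.
move=> hk; rewrite /Tb /uu.
have := REC k (2 + b * (k%:Z + 1) + a%:Z) hk.
have -> : 2 + b * (k%:Z + 1) + a%:Z + 1 = 2 + b * (k%:Z + 1) + (a.+1)%:Z by ring.
by have -> : 2 + b * (k%:Z + 1) + a%:Z - k%:Z = 2 + (b - 1) * (k%:Z + 1) + (a.+1)%:Z by ring.
Qed.

Lemma TF2 k b : (1 < k)%N ->
  'X * Tb k (b + 1) 0 = uu k * Tb k b k - Tb k b 0.
Proof.
move=> hk; rewrite /Tb /uu.
have := REC k (2 + b * (k%:Z + 1) + k%:Z) hk.
have -> : 2 + b * (k%:Z + 1) + k%:Z + 1 = 2 + (b + 1) * (k%:Z + 1) + 0%N%:Z by ring.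
by have -> : 2 + b * (k%:Z + 1) + k%:Z - k%:Z = 2 + b * (k%:Z + 1) + 0%N%:Z by ring.
Qed.

Lemma FR1 k r p : (1 < k)%N ->
  'X * Fr k r p = uu k * Fr k r.+1 p - Fr k r.+1 (p + 1).
Proof.
move=> hk; rewrite /Fr /uu.
have := REC k (1 - (r.+1)%:Z - k%:Z * p) hk.
have -> : 1 - (r.+1)%:Z - k%:Z * p + 1 = 1 - r%:Z - k%:Z * p by ring.
by have -> : 1 - (r.+1)%:Z - k%:Z * p - k%:Z = 1 - (r.+1)%:Z - k%:Z * (p + 1) by ring.
Qed.

Lemma FR0 k p : (1 < k)%N ->
  'X * Fr k k.-1 (p - 1) = uu k * Fr k 0 p - Fr k 0 (p + 1).
Proof.
move=> hk; rewrite /Fr /uu.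
have := REC k (1 - 0%N%:Z - k%:Z * p) hk.
have -> : 1 - 0%N%:Z - k%:Z * p + 1 = 1 - (k.-1)%:Z - k%:Z * (p - 1).
  have -> : (k.-1)%:Z = k%:Z - 1 by case: k hk => // k _ /=; lia.
  by ring.
by have -> : 1 - 0%N%:Z - k%:Z * p - k%:Z = 1 - 0%N%:Z - k%:Z * (p + 1) by ring.
Qed.


Lemma LD_one k : LD k 0 1 0 1.
Proof. by exists 0; rewrite mulr0 add0r expr0 !mulr1. Qed.

Lemma LDfix k m c c' e e' p : c = c' -> e = e' -> LD k m c e p -> LD k m c' e' p.
Proof. by move=> -> ->. Qed.

Definition cF (t a : nat) : int := (-1) ^+ a * ('C(t + a - 1, a))%:Z.

Lemma UFor k t : (1 < k)%N ->
  (forall a, (a < k)%N -> LD k a (cF t a) ((k - 1) * (t + a)) (Tb k (t%:Z - 1) a)) /\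
  LD k 0 1 ((k - 1) * t) (Tb k (t%:Z - 1) k).
Proof.
move=> hk; have hk0 : (0 < k)%N by lia.
elim: t => [|t [IHa IHk]].
  split.
    case=> [|a] ha.
      rewrite /Tb; have -> : 2 + (0%N%:Z - 1) * (k%:Z + 1) + 0%N%:Z = 1 - k%:Z by ring.
      rewrite Fib_1k //; apply: (LDfix _ _ (LD_one k)); [by rewrite /cF | lia].
    rewrite /Tb; have -> : 2 + (0%N%:Z - 1) * (k%:Z + 1) + (a.+1)%:Z = 1 - (k - a.+1)%N%:Z.
      by lia.
    rewrite Fib_zero; last by lia.
    by apply: LDeq (LD0 _ _ _); rewrite /cF bin_small ?mulr0 //; lia.
  rewrite /Tb; have -> : 2 + (0%N%:Z - 1) * (k%:Z + 1) + k%:Z = 1 by ring.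
  rewrite Fib1 //; apply: (LDfix _ _ (LD_one k)) => //; lia.
have er : (t.+1)%:Z - 1 = t%:Z by lia.
rewrite er.
have h0 : LD k 0 (cF t.+1 0) ((k - 1) * (t.+1 + 0)) (Tb k t%:Z 0).
  have e := TF2 (t%:Z - 1) hk; rewrite subrK in e.
  have h1 : LD k 0 0 ((k - 1) * (t + 0)) (uu k * Tb k (t%:Z - 1) k).
    exact: (LDhi _ (ltn0Sn 0) (LDu IHk)).
  have h3 := LDB h1 (IHa 0%N hk0); rewrite -e in h3.
  have h4 := LDsh2 h3.
  have h5 : LD k 0 (- (0 - cF t 0)) ((k - 1) * (t.+1 + 0)).+1 ('X * Tb k t%:Z 0).
    by apply: LDeqe h4; nia.
  by apply: LDeq (LDdivX hk0 h5); rewrite /cF !expr0 !bin0 !mul1r sub0r opprK.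
have hall : forall a, (a < k)%N -> LD k a (cF t.+1 a) ((k - 1) * (t.+1 + a)) (Tb k t%:Z a).
  elim=> [|a IH] ha; first exact: h0.
  have e := TF1 t%:Z a hk.
  have h1 := LDu (IH (ltnW ha)).
  have h2 := IHa a.+1 ha.
  have h1' : LD k a.+1 (cF t.+1 a) ((k - 1) * (t + a.+1)) (uu k * Tb k t%:Z a).
    by apply: LDeqe h1; rewrite addSnnS.
  have h3 := LDB h1' h2; rewrite -e in h3.
  have h4 := LDsh2 h3.
  have h5 : LD k a.+1 (- (cF t.+1 a - cF t a.+1)) ((k - 1) * (t.+1 + a.+1)).+1 ('X * Tb k t%:Z a.+1).
    by apply: LDeqe h4; nia.
  apply: LDeq (LDdivX hk0 h5); rewrite /cF.
  have -> : (t.+1 + a - 1 = t + a)%N by lia.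
  have -> : (t + a.+1 - 1 = t + a)%N by lia.
  have -> : (t.+1 + a.+1 - 1 = (t + a).+1)%N by lia.
  by rewrite binS PoszD exprS; ring.
split => //.
have e := TF1 t%:Z k.-1 hk; rewrite prednK // in e.
have h1 : LD k 0 0 ((k - 1) * t) (uu k * Tb k t%:Z k.-1).
  by apply: (LDhi _ _ (LDu (hall k.-1 _))); lia.
have h3 := LDB h1 IHk; rewrite -e in h3.
have h4 := LDsh2 h3.
have h5 : LD k 0 (- (0 - 1)) ((k - 1) * t.+1).+1 ('X * Tb k t%:Z k).
  by apply: LDeqe h4; nia.
by apply: LDeq (LDdivX hk0 h5); rewrite sub0r opprK.
Qed.

Definition cB (be a : nat) : int := (-1) ^+ be * ('C(be, a))%:Z.

Lemma UBack k be : (1 < k)%N ->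
  (forall a, (a < k)%N -> LD k a (cB be a) (be + (k - 1) * a) (Tb k (-1 - be%:Z) a)) /\
  (forall a, (0 < a)%N -> (a < k)%N -> (be < a)%N -> Tb k (-1 - be%:Z) a = 0) /\
  LD k 0 ((-1) ^+ be) be (Tb k (-1 - be%:Z) k).
Proof.
move=> hk; have hk0 : (0 < k)%N by lia.
have base0 : Tb k (-1 - 0%N%:Z) 0 = 1.
  rewrite /Tb; have -> : 2 + (-1 - 0%N%:Z) * (k%:Z + 1) + 0%N%:Z = 1 - k%:Z by ring.
  by rewrite Fib_1k.
have basea : forall a, (0 < a)%N -> (a < k)%N -> Tb k (-1 - 0%N%:Z) a = 0.
  move=> a h1 h2; rewrite /Tb.
  have -> : 2 + (-1 - 0%N%:Z) * (k%:Z + 1) + a%:Z = 1 - (k - a)%N%:Z by lia.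
  by rewrite Fib_zero //; lia.
elim: be => [|be [IHa [IHz IHk]]].
  split.
    case=> [|a] ha; first by rewrite base0; apply: (LDfix _ _ (LD_one k)); [by rewrite /cB | lia].
    by rewrite basea //; apply: LDeq (LD0 _ _ _); rewrite /cB bin_small ?mulr0.
  split; first by move=> a h1 h2 h3; rewrite basea.
  rewrite /Tb; have -> : 2 + (-1 - 0%N%:Z) * (k%:Z + 1) + k%:Z = 1 by ring.
  by rewrite Fib1 //; apply: (LDfix _ _ (LD_one k)).
set b := -1 - be%:Z.
have eb : -1 - (be.+1)%:Z = b - 1 by rewrite /b; ring.
rewrite eb.
have ea : forall a, (a < k)%N -> Tb k (b - 1) a.+1 = uu k * Tb k b a - 'X * Tb k b a.+1.
  by move=> a ha; rewrite (TF1 b a hk); ring.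
have ek : Tb k (b - 1) k = uu k * Tb k b k.-1 - 'X * Tb k b k.
  by have := ea k.-1 (ltac:(lia)); rewrite prednK.
have e0 : Tb k (b - 1) 0 = uu k * Tb k (b - 1) k - 'X * Tb k b 0.
  by have := TF2 (b - 1) hk; rewrite subrK => ->; ring.
have hK : LD k 0 ((-1) ^+ be.+1) be.+1 (Tb k (b - 1) k).
  rewrite ek.
  have h1 : LD k 0 0 be.+1 (uu k * Tb k b k.-1).
    by apply: (LDhi _ _ (LDu (IHa k.-1 _))); lia.
  by apply: LDeq (LDB h1 (LDX IHk)); rewrite exprS; ring.
split.
  case=> [|a] ha.
    rewrite e0.
    have h1 : LD k 0 0 (be.+1 + (k - 1) * 0) (uu k * Tb k (b - 1) k).
      exact: (LDhi _ (ltn0Sn 0) (LDu hK)).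
    have h2 := LDX (IHa 0%N hk0).
    have h2' : LD k 0 (cB be 0) (be.+1 + (k - 1) * 0) ('X * Tb k b 0).
      by apply: LDeqe h2; lia.
    by apply: LDeq (LDB h1 h2'); rewrite /cB !bin0 exprS; ring.
  rewrite ea; last by lia.
  have h1 := LDu (IHa a (ltnW ha)).
  have h2 := LDX (IHa a.+1 ha).
  have h2' : LD k a.+1 (cB be a.+1) ((be + (k - 1) * a) + k) ('X * Tb k b a.+1).
    by apply: LDeqe h2; nia.
  have h3 := LDB h1 (LDsh1 h2').
  have h4 := LDsh2 h3.
  apply: (LDfix _ _ h4); last by nia.
  by rewrite /cB binS PoszD exprS; ring.
split; last exact: hK.
move=> [|a] h1 h2 h3 //.
rewrite ea; last by lia.
rewrite (IHz a) ?(IHz a.+1); try lia.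
by rewrite !mulr0 subr0.
Qed.


Lemma XLD_one : XLD 0 1 1.
Proof. by exists 0; rewrite mulr0 add0r expr0 mulr1. Qed.

Lemma XLDfix r c c' p : c = c' -> XLD r c p -> XLD r c' p.
Proof. by move=> ->. Qed.

Lemma Fr_row0 k r : (1 < k)%N -> (r < k)%N -> Fr k r 0 = if r == 0%N then 1 else 0.
Proof.
move=> hk hr; rewrite /Fr mulr0 subr0; case: r hr => [|r] hr.
  by rewrite subr0 Fib1 //; lia.
by rewrite Fib_zero //; lia.
Qed.

Lemma Fr_01 k : (1 < k)%N -> Fr k 0 1 = 1.
Proof. by move=> hk; rewrite /Fr subr0 mulr1 Fib_1k. Qed.

Lemma Fr_km1 k : (1 < k)%N -> Fr k k.-1 (-1) = 'X^(k.-1).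
Proof.
move=> hk; rewrite /Fr -Fib2 //; congr Fib.
have -> : (k.-1)%:Z = k%:Z - 1 by case: k hk => // k _ /=; lia.
ring.
Qed.

Lemma XBack k be : (1 < k)%N -> forall r, (r < k)%N ->
  XLD r ((-1) ^+ r * ('C(be, r))%:Z) (Fr k r be%:Z) /\ ((be < r)%N -> Fr k r be%:Z = 0).
Proof.
move=> hk; have hk0 : (0 < k)%N by lia.
elim: be => [|be IH] r hr.
  rewrite Fr_row0 //; case: r hr => [|r] hr /=.
    by split => //; apply: (XLDfix _ XLD_one); rewrite expr0 bin0 mul1r.
  by split => //; apply: (XLDfix _ (XLD0 _)); rewrite bin0n mulr0.
have eb : (be.+1)%:Z = be%:Z + 1 by lia.
rewrite eb.
case: r hr => [|r] hr.
  have e : Fr k 0 (be%:Z + 1) = uu k * Fr k 0 be%:Z - 'X * Fr k k.-1 (be%:Z - 1).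
    by rewrite (FR0 be%:Z hk); ring.
  split => //; rewrite e.
  have h1 := XLDu hk0 (IH 0%N hk0).1.
  by apply: (XLDfix _ (XLDB h1 (XLDX0 _))); rewrite !expr0 !bin0 !mul1r subr0.
have e : Fr k r.+1 (be%:Z + 1) = uu k * Fr k r.+1 be%:Z - 'X * Fr k r be%:Z.
  by rewrite (FR1 r be%:Z hk); ring.
rewrite e; split.
  have h1 := XLDu hr (IH r.+1 hr).1.
  have h2 := XLDX (IH r (ltnW hr)).1.
  by apply: (XLDfix _ (XLDB h1 h2)); rewrite binS PoszD exprS; ring.
move=> hb; rewrite (IH r.+1 hr).2 ?(IH r (ltnW hr)).2; try lia.
by rewrite !mulr0 subr0.
Qed.

Lemma XFor k pi : (1 < k)%N -> forall r, (r < k)%N ->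
  XLD r (('C(r + pi - 1, r))%:Z) (Fr k r (- pi%:Z)).
Proof.
move=> hk; have hk0 : (0 < k)%N by lia.
elim: pi => [|pi IH] r hr.
  rewrite oppr0 Fr_row0 //; case: r hr => [|r] hr /=.
    exact: XLD_one.
  by apply: (XLDfix _ (XLD0 _)); rewrite bin_small //; lia.
elim: r hr => [|r IHr] hr.
  have e : uu k * Fr k 0 (- (pi.+1)%:Z) = 'X * Fr k k.-1 (- (pi.+1)%:Z - 1) + Fr k 0 (- pi%:Z).
    rewrite (FR0 (- (pi.+1)%:Z) hk).
    have -> : - (pi.+1)%:Z + 1 = - pi%:Z by lia.
    ring.
  apply: (XLDuinv hk0); rewrite e.
  by apply: (XLDfix _ (XLDD (XLDX0 _) (IH 0%N hk0))); rewrite add0r !bin0.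
have e : uu k * Fr k r.+1 (- (pi.+1)%:Z) = 'X * Fr k r (- (pi.+1)%:Z) + Fr k r.+1 (- pi%:Z).
  rewrite (FR1 r (- (pi.+1)%:Z) hk).
  have -> : - (pi.+1)%:Z + 1 = - pi%:Z by lia.
  ring.
apply: (XLDuinv hr); rewrite e.
apply: (XLDfix _ (XLDD (XLDX (IHr (ltnW hr))) (IH r.+1 hr))).
have -> : (r + pi.+1 - 1 = r + pi)%N by lia.
have -> : (r.+1 + pi - 1 = r + pi)%N by lia.
have -> : (r.+1 + pi.+1 - 1 = (r + pi).+1)%N by lia.
by rewrite binS PoszD addrC.
Qed.

Lemma Hom1 k : Hom k 0 1.
Proof. by exists 1; rewrite -polyC1 comp_polyC expr0 mul1r. Qed.

Lemma HomXn k r : Hom k r 'X^r.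
Proof. by exists 1; rewrite -polyC1 comp_polyC mulr1. Qed.

Lemma HomRow0 k r : (1 < k)%N -> (r < k)%N -> Hom k r (Fr k r 0).
Proof.
move=> hk hr; rewrite Fr_row0 //; case: r hr => [|r] hr /=; first exact: Hom1.
exact: Hom0.
Qed.

Lemma HBack k be : (1 < k)%N ->
  (forall r, (r < k)%N -> Hom k r (Fr k r be%:Z)) /\ Hom k k.-1 (Fr k k.-1 (be%:Z - 1)).
Proof.
move=> hk; have hk0 : (0 < k)%N by lia.
elim: be => [|be [IH1 IH2]].
  split; first by move=> r hr; exact: (HomRow0 hk hr).
  by rewrite sub0r Fr_km1 //; exact: HomXn.
have eb : (be.+1)%:Z = be%:Z + 1 by lia.
rewrite eb addrK; split; last by apply: IH1; lia.
case=> [|r] hr.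
  have e : Fr k 0 (be%:Z + 1) = uu k * Fr k 0 be%:Z - 'X * Fr k k.-1 (be%:Z - 1).
    by rewrite (FR0 be%:Z hk); ring.
  rewrite e; apply: HomB; first exact: Homu (IH1 _ hk0).
  by apply: Homwrap; have := HomX IH2; rewrite prednK.
have e : Fr k r.+1 (be%:Z + 1) = uu k * Fr k r.+1 be%:Z - 'X * Fr k r be%:Z.
  by rewrite (FR1 r be%:Z hk); ring.
rewrite e; apply: HomB; first exact: Homu (IH1 _ hr).
exact: HomX (IH1 _ (ltnW hr)).
Qed.

Lemma HFor k pi : (1 < k)%N ->
  (forall r, (r < k)%N -> Hom k r (Fr k r (- pi%:Z))) /\ Hom k 0 (Fr k 0 (1 - pi%:Z)).
Proof.
move=> hk; have hk0 : (0 < k)%N by lia.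
elim: pi => [|pi [IH1 IH2]].
  split; first by rewrite oppr0 => r hr; exact: (HomRow0 hk hr).
  by rewrite subr0 Fr_01 //; exact: Hom1.
have ep : 1 - (pi.+1)%:Z = - pi%:Z by lia.
rewrite ep; split; last exact: IH1.
have main : forall j, (j < k)%N -> Hom k (k.-1 - j) (Fr k (k.-1 - j) (- (pi.+1)%:Z)).
  elim=> [|j IHj] hj.
    rewrite subn0.
    have e := FR0 (- pi%:Z) hk.
    have -> : - (pi.+1)%:Z = - pi%:Z - 1 by lia.
    apply: (HomdivX0 hk0); rewrite e; apply: HomB; first exact: Homu (IH1 _ hk0).
    by have -> : - pi%:Z + 1 = 1 - pi%:Z by ring.
  have e := FR1 (k.-1 - j.+1) (- (pi.+1)%:Z) hk.
  have hs : ((k.-1 - j.+1).+1 = k.-1 - j)%N by lia.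
  rewrite hs in e.
  have -> : (k.-1 - j.+1 = (k.-1 - j).-1)%N by lia.
  apply: HomdivX; first by lia.
  have -> : ((k.-1 - j).-1 = k.-1 - j.+1)%N by lia.
  rewrite e; apply: HomB; first exact: Homu (IHj (ltnW hj)).
  have -> : - (pi.+1)%:Z + 1 = - pi%:Z by lia.
  by apply: IH1; lia.
move=> r hr; have := main (k.-1 - r)%N (ltac:(lia)).
by have -> : (k.-1 - (k.-1 - r) = r)%N by lia.
Qed.


Lemma rnk_coord k n : (1 < k)%N ->
  (rnk k n < k)%N /\ exists p : int, n = 1 - (rnk k n)%:Z - k%:Z * p.
Proof.
move=> hk; case: n => [[|m]|m] /=.
- split; first by rewrite modn_small.
  by exists 0; rewrite modn_small //; lia.
- split; first by rewrite ltn_mod (ltn_trans _ hk).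
  have h := divn_eq ((k - 1) * m) k.
  exists (Posz (((k - 1) * m) %/ k)%N - m%:Z).
  move: h; set q := (((k - 1) * m) %/ k)%N; set r := (((k - 1) * m) %% k)%N => h.
  rewrite subn1 /=.
  have -> : (k.-1 * (m.+1 - 1) = (k - 1) * m)%N by rewrite subn1 /= subn1.
  rewrite -/r.
  nia.
- split; first by rewrite ltn_mod (ltn_trans _ hk).
  have h := divn_eq (m.+1 + 1) k.
  exists (Posz ((m.+1 + 1) %/ k)%N).
  move: h; set q := ((m.+1 + 1) %/ k)%N; set r := ((m.+1 + 1) %% k)%N => h.
  rewrite NegzE; nia.
Qed.

Lemma rho_coord k n : (1 < k)%N ->
  exists (b : int) (a : nat), (a <= k)%N /\ n = 2 + b * (k%:Z + 1) + a%:Z /\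
     rhonk k n = (a %% k)%N.
Proof.
move=> hk.
have hk1 : (k.+1)%:Z != 0 by [].
have h := divz_eq (n - 2) (k.+1)%:Z.
have h0 := modz_ge0 (n - 2) hk1.
have h1 := ltz_pmod (n - 2) (ltac:(by []) : 0 < (k.+1)%:Z).
exists ((n - 2) %/ (k.+1)%:Z)%Z, (absz ((n - 2) %% (k.+1)%:Z)%Z).
rewrite /rhonk; split; last split => //.
  lia.
move: h h0 h1; set q := ((n - 2) %/ (k.+1)%:Z)%Z; set r := ((n - 2) %% (k.+1)%:Z)%Z.
move=> h h0 h1.
have -> : (absz r)%:Z = r by rewrite gez0_abs.
lia.
Qed.

Lemma LDnorm k m c e p : (0 < k)%N -> LD k m c e p ->
  exists c' e', (e' < k)%N /\ (c' = c \/ c' = - c) /\ LD k m c' e' p.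
Proof.
move=> hk; elim/ltn_ind: e c => e IH c h.
case: (ltnP e k) => he; first by exists c, e; split => //; split => //; left.
have h' : LD k m c ((e - k) + k) p by rewrite subnK.
have [c' [e' [h1 [h2 h3]]]] := IH (e - k)%N (ltac:(lia)) (- c) (LDsh1 h').
exists c', e'; split => //; split => //.
by case: h2 => ->; [right | left; rewrite opprK].
Qed.

Lemma odd_factor k : odd k -> exists S : {poly int}, 'X^k + 1 = ('X + 1) * S /\ S.[-1] != 0.
Proof.
move=> hk.
have : root ('X^k + 1 : {poly int}) (-1).
  by rewrite /root hornerD hornerXn hornerC -signr_odd hk expr1 addNr.
case/factor_theorem => S hS; exists S.
rewrite polyCN opprK polyC1 mulrC in hS; split => //.
have := congr1 (fun q : {poly int} => (q^`()).[-1]) hS.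
rewrite /= derivD derivXn -polyC1 derivC addr0 derivM derivD derivX derivC addr0 polyC1.
rewrite !hornerE /= hornerMn hornerXn.
have : odd k.-1 = false by case: (k) hk => //= k' /negbTE.
rewrite -signr_odd => ->; rewrite expr0 => <-.
by rewrite pnatr_eq0; case: (k) hk.
Qed.

Unset Implicit Arguments.

Theorem mainTheorem13 (k : nat) (n : int) :
  (2 <= k)%N -> Fib k n != 0 ->
  (exists Q : {poly int},
      Fib k n = 'X^(rnk k n) * ('X^k + 1) ^+ (rhonk k n) * (Q \Po 'X^k)
      /\ ~ (exists P : {poly int}, Q = P * ('X + 1))
      /\ Q.[0] != 0)
  /\ (odd k ->
      exists G : {poly int},
        Fib k n = ('X + 1) ^+ (rhonk k n) * G /\ ~~ root G (-1)).
Proof.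
move=> hk hF; have hk0 : (0 < k)%N by lia.
have [hr [p hp]] := rnk_coord n hk.
have [b [a [ha [hn hrho]]]] := rho_coord n hk.
have [hH [w [hw0 hw]]] : Hom k (rnk k n) (Fib k n) /\
    exists w, w != 0 /\ XLD (rnk k n) w (Fib k n).
  have eF : Fib k n = Fr k (rnk k n) p by rewrite /Fr -hp.
  rewrite eF; case: p hp eF => [be | pi] hp eF.
    split; first exact: ((HBack be hk).1 _ hr).
    have [hx hz] := XBack be hk hr.
    exists ((-1) ^+ rnk k n * ('C(be, rnk k n))%:Z); split => //.
    case: (ltnP be (rnk k n)) => hbr.
      by move: hF; rewrite eF hz // eqxx.
    by rewrite mulf_neq0 ?signr_eq0 // eqz_nat -lt0n bin_gt0.
  have eN : Negz pi = - (pi.+1)%:Z by rewrite NegzE.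
  rewrite eN; split; first exact: ((HFor pi.+1 hk).1 _ hr).
  exists ('C(rnk k n + pi.+1 - 1, rnk k n))%:Z; split; last first.
    by have := XFor pi.+1 hk hr; apply.
  by rewrite eqz_nat -lt0n bin_gt0; lia.
have [c [e [hc hld]]] : exists c e, c != 0 /\ LD k (rhonk k n) c e (Fib k n).
  have eT : Fib k n = Tb k b a by rewrite /Tb -hn.
  rewrite eT hrho; case: b hn eT => [t | be] hn eT.
    have [hA hK] := UFor t.+1 hk.
    have er : (t.+1)%:Z - 1 = t%:Z by lia.
    rewrite er in hA hK.
    case: (ltnP a k) => hak.
      rewrite modn_small //; exists (cF t.+1 a), ((k - 1) * (t.+1 + a))%N.
      split; last exact: hA.
      by rewrite /cF mulf_neq0 ?signr_eq0 // eqz_nat -lt0n bin_gt0; lia.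
    have -> : a = k by lia.
    by rewrite modnn; exists 1, ((k - 1) * t.+1)%N.
  have eb : Negz be = -1 - be%:Z by rewrite NegzE; lia.
  rewrite eb; have [hA [hZ hK]] := UBack be hk.
  case: (ltnP a k) => hak.
    rewrite modn_small //; exists (cB be a), (be + (k - 1) * a)%N.
    split; last exact: hA.
    rewrite /cB mulf_neq0 ?signr_eq0 // eqz_nat -lt0n bin_gt0.
    case: (leqP a be) => // hba.
    have ha0 : (0 < a)%N by lia.
    by move: hF; rewrite eT eb hZ // eqxx.
  have -> : a = k by lia.
  by rewrite modnn; exists ((-1) ^+ be), be; rewrite signr_eq0.
have [c' [e' [he' [hc' hld']]]] := LDnorm hk0 hld.
have hc'0 : c' != 0 by case: hc' => ->; rewrite ?oppr_eq0.
have [P [hP hcoef]] := Hom_coef hk0 hH.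
rewrite hP in hld'.
have [Q [hPQ hQ]] := EXTRACT hk0 hr he' hc'0 hld'.
have e1 : (('X + 1) \Po 'X^k : {poly int}) = 'X^k + 1.
  by rewrite comp_polyD comp_polyX -polyC1 comp_polyC.
have hFQ : Fib k n = 'X^(rnk k n) * ('X^k + 1) ^+ (rhonk k n) * (Q \Po 'X^k).
  by rewrite hP hPQ comp_polyM rmorphXn /= e1 mulrA.
split.
  exists Q; split => //; split.
    case=> P' hP'; move: hQ; rewrite hP' hornerM hornerD hornerX hornerC.
    by rewrite addNr mulr0 eqxx.
  have h1 := XLD_coef hw; rewrite hcoef -horner_coef0 hPQ !hornerE in h1.
  by move: h1; rewrite expr1n mul1r => ->.
move=> hodd; have [S [hS hS0]] := odd_factor hodd.
exists ('X^(rnk k n) * S ^+ (rhonk k n) * (Q \Po 'X^k)); split.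
  by rewrite hFQ hS exprMn; ring.
rewrite /root !hornerE horner_comp hornerXn -[(-1) ^+ k]signr_odd hodd expr1.
by rewrite mulf_neq0 ?mulf_neq0 ?expf_neq0 ?signr_eq0.
Qed.
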